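(* Let $n\ge3$ and let $W\subset\mathbb{C}^n$ be a real $3$-dimensional subspace. Given any unit vector $x\in\mathbb{C}^n$ and any unit vector $e\perp\mathrm{span}_{\mathbb{R}}\{x,Jx\}$, there exists $V\in\mathrm{SU}(n)\cdot W$ with $x,e\in V$.
   Context: $J$ denotes multiplication by $i$ on $\mathbb{C}^n=\mathbb{R}^{2n}$, with the standard real inner product. $\mathrm{SU}(n)\cdot W$ is the orbit of $W$ in the Grassmannian of real $3$-planes under the standard action of $\mathrm{SU}(n)$. *)

(* Defs.v *)
From HB Require Import structures.
From mathcomp Require Import all_boot all_order all_algebra.
From mathcomp Require Import reals.
From mathcomp Require Import complex.
Set Implicit Arguments. Unset Strict Implicit. Unset Printing Implicit Defensive.
Import Order.TTheory GRing.Theory Num.Theory.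
Local Open Scope ring_scope.

(* C^n is modelled as column vectors 'cV[R[i]]_n over the complex numbers
   R[i] built on the real numbers R : realType.  As a real vector space it is
   R^(2n); J is multiplication by 'i. *)

Section Defs.
Variables (R : realType) (n : nat).
Local Notation C := (complex R).
Local Notation vec := 'cV[C]_n.

Definition rdot (u v : vec) : R :=
  @complex.Re R (\sum_(k < n) (conjc (u k 0) * v k 0)).

Definition Jmul (u : vec) : vec := (Complex 0 1 : C) *: u.

Definition rscale (a : R) (u : vec) : vec := (Complex a 0 : C) *: u.

Definition is_unit_vec (u : vec) : Prop := rdot u u = 1.

Definition in_rspan2 (x y v : vec) : Prop :=
  exists a b : R, v = rscale a x + rscale b y.

Definition perp_xJx (x u : vec) : Prop :=
  forall v, in_rspan2 x (Jmul x) v -> rdot u v = 0.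

Definition rlin_indep3 (w1 w2 w3 : vec) : Prop :=
  forall a b c : R, rscale a w1 + rscale b w2 + rscale c w3 = 0 ->
    [/\ a = 0, b = 0 & c = 0].

Definition real_3_subspace (W : vec -> Prop) : Prop :=
  exists w1 w2 w3 : vec, rlin_indep3 w1 w2 w3 /\
    forall v, W v <-> exists a b c : R, v = rscale a w1 + rscale b w2 + rscale c w3.

Definition adjmx (U : 'M[C]_n) : 'M[C]_n := (map_mx (@conjc R) U)^T.

Definition in_SU (U : 'M[C]_n) : Prop := adjmx U *m U = 1%:M /\ \det U = 1.

Definition act_set (U : 'M[C]_n) (W : vec -> Prop) (v : vec) : Prop :=
  exists w, W w /\ v = U *m w.

Definition in_SU_orbit (W V : vec -> Prop) : Prop :=
  exists U, in_SU U /\ forall v, V v <-> act_set U W v.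

End Defs.

(* Main.v *)
Require Import Defs.
From HB Require Import structures.
From mathcomp Require Import all_boot all_order all_algebra.
From mathcomp Require Import reals complex.
From mathcomp Require Import spectral sesquilinear.
From mathcomp Require Import ring lra.
Import Order.TTheory GRing.Theory Num.Theory Num.Def.
Local Open Scope ring_scope.
Set Implicit Arguments. Unset Strict Implicit. Unset Printing Implicit Defensive.
Local Open Scope sesquilinear_scope.
Section Gen.
Variable C : numClosedFieldType.
Local Notation "B ^!" :=
  (orthomx conjC (mx_of_hermitian (hermitian1mx _)) B) : matrix_set_scope.

Lemma colmx_unitary n (V : 'M[C]_(2, n)) : V \is unitarymx ->
  col_mx V (schmidt (row_base V^!%MS)) \is unitarymx.
Proof.
move=> Vu.
apply/unitarymxP; rewrite tr_col_mx map_row_mx mul_col_row.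
rewrite !(unitarymxP _) ?schmidt_unitarymx ?rank_leq_col //.
rewrite !(orthomx1P _) -?scalar_mx_block //.
  by rewrite eqmx_schmidt_free ?eq_row_base ?row_base_free.
by rewrite orthomx_sym eqmx_schmidt_free ?eq_row_base ?row_base_free.
Qed.
 

Lemma ext_square n (V : 'M[C]_(2,n)) : (2 < n)%N -> V \is unitarymx ->
  exists Q : 'M[C]_n, [/\ Q \is unitarymx, \det Q = 1 &
     forall (i : 'I_n) j, (i < 2)%N -> Q i j = V (inord i) j].
Proof.
move=> hn Vu.
have h : (2 + \rank V^!)%N = n.
  by rewrite rank_ortho mxrank_unitary // subnKC // ltnW.
suff: forall m (Q0 : 'M[C]_(m,n)), m = n -> Q0 \is unitarymx ->
  (forall (i:'I_m) j, (i<2)%N -> Q0 i j = V (inord i) j) ->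
  exists Q : 'M[C]_n, [/\ Q \is unitarymx, \det Q = 1 &
     forall (i : 'I_n) j, (i < 2)%N -> Q i j = V (inord i) j].
  move=> H; apply: (H _ (col_mx V (schmidt (row_base V^!%MS))) h); first exact: colmx_unitary.
  move=> i j hi; have -> : i = lshift _ (Ordinal hi) by apply/val_inj.
  by rewrite col_mxEu; congr (V _ j); apply/val_inj; rewrite /= inordK.
move=> m Q0 Em; subst m => Qu Qrow.
set d := \det Q0.
have dd : d * d^* = 1.
  have := unitarymxP Qu => /(congr1 determinant).
  by rewrite det_mulmx det1 det_map_mx det_tr.
pose i2 : 'I_n := Ordinal hn.
pose D := diag_mx (\row_k (if k == i2 then d^* else 1)).
have Du : D \is unitarymx.
  apply/unitarymxP; apply/matrixP => i j; rewrite !mxE.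
  rewrite (bigD1 i) //= big1 => [|k /negbTE nki]; last first.
    by rewrite /D !mxE (eq_sym i k) nki mulr0n mul0r.
  rewrite /D !mxE eqxx addr0 mulr1n.
  case: (eqVneq i j) => [<-|nij].
    rewrite !mulr1n; case: (i == i2); last by rewrite conjC1 mulr1.
    by rewrite conjCK mulrC.
  by rewrite !mulr0n conjC0 mulr0.
exists (D *m Q0); split.
- exact: mul_unitarymx.
- rewrite det_mulmx det_diag (bigD1 i2) //= big1 => [|k nk]; last first.
    by rewrite mxE (negbTE nk).
  by rewrite mxE eqxx mulr1 mulrC.
- move=> i j hi; rewrite mul_diag_mx !mxE Qrow //.
  have -> : (i == i2) = false by apply/negbTE; apply/eqP => /(congr1 val) /= E; rewrite E in hi.
  by rewrite mul1r.
Qed.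
End Gen.

Section Cx.
Variables (R : realType) (n : nat).
Local Notation C := (complex R).
Local Notation vec := 'cV[C]_n.
Local Notation Re := (@complex.Re R).
Local Notation Im := (@complex.Im R).

Implicit Types u v w : vec.
Definition hd (u v : vec) : C := \sum_(k < n) (conjC (u k 0) * v k 0).

Lemma rdotE u v : rdot u v = Re (hd u v). Proof. by []. Qed.
Lemma rscaleE a (u : vec) : rscale a u = (a%:C)%C *: u. Proof. by []. Qed.
Lemma JmulE (u : vec) : Jmul u = ('i)%C *: u. Proof. by []. Qed.

Lemma hdDr u v w : hd u (v + w) = hd u v + hd u w.
Proof. by rewrite /hd -big_split; apply: eq_bigr => k _; rewrite mxE mulrDr. Qed.
Lemma hdDl u v w : hd (u + v) w = hd u w + hd v w.
Proof. by rewrite /hd -big_split; apply: eq_bigr => k _; rewrite mxE rmorphD mulrDl. Qed.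
Lemma hdZr u c v : hd u (c *: v) = c * hd u v.
Proof. by rewrite /hd mulr_sumr; apply: eq_bigr => k _; rewrite mxE mulrCA. Qed.
Lemma hdZl c u v : hd (c *: u) v = conjC c * hd u v.
Proof. by rewrite /hd mulr_sumr; apply: eq_bigr => k _; rewrite mxE rmorphM mulrA. Qed.
Lemma hd_sym u v : hd v u = conjC (hd u v).
Proof.
rewrite /hd rmorph_sum; apply: eq_bigr => k _.
by rewrite rmorphM /= conjCK mulrC.
Qed.

Lemma ReD (a b : C) : Re (a + b) = Re a + Re b. Proof. by case: a; case: b. Qed.
Lemma ReM (r : R) (z : C) : Re ((r%:C)%C * z) = r * Re z.
Proof. by case: z => a b /=; rewrite mul0r subr0. Qed.
Lemma ReJ (z : C) : Re (conjC z) = Re z. Proof. by case: z. Qed.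

Lemma hdE u v : hd u v = Complex (rdot u v) (rdot (Jmul u) v).
Proof.
rewrite !rdotE JmulE hdZl.
case: (hd u v) => a b /=; congr Complex; ring.
Qed.

Lemma hd_ge0 u : 0 <= hd u u.
Proof. by apply: sumr_ge0 => k _; rewrite mulrC mul_conjC_ge0. Qed.

Lemma rdotJ u : rdot (Jmul u) u = 0.
Proof. by have := ger0_Im (hd_ge0 u); rewrite hdE. Qed.

Lemma rdot_ge0 u : 0 <= rdot u u.
Proof. by have := hd_ge0 u; rewrite lecE hdE /= => /andP[]. Qed.

Lemma hd_self u : hd u u = ((rdot u u)%:C)%C.
Proof. by rewrite hdE rdotJ. Qed.

Lemma rdot_eq0 u : rdot u u = 0 -> u = 0.
Proof.
move=> h; have h0 : hd u u = 0 by rewrite hd_self h.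
have := h0; rewrite /hd => /eqP; rewrite psumr_eq0; last first.
  by move=> k _; rewrite mulrC mul_conjC_ge0.
move=> /allP H; apply/matrixP => i j; rewrite !mxE (ord1 j).
have := H i (mem_index_enum i); rewrite implyTb mulf_eq0 conjC_eq0 orbb.
by move/eqP.
Qed.

Lemma rdotDr u v w : rdot u (v + w) = rdot u v + rdot u w.
Proof. by rewrite !rdotE hdDr ReD. Qed.
Lemma rdotDl u v w : rdot (u + v) w = rdot u w + rdot v w.
Proof. by rewrite !rdotE hdDl ReD. Qed.
Lemma rdotZr u a v : rdot u (rscale a v) = a * rdot u v.
Proof. by rewrite !rdotE rscaleE hdZr ReM. Qed.
Lemma rdotZl a u v : rdot (rscale a u) v = a * rdot u v.
Proof.
rewrite !rdotE rscaleE hdZl.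
have -> : conjC ((a%:C)%C : C) = (a%:C)%C := conjc_real a.
by rewrite ReM.
Qed.
Lemma rdotC u v : rdot u v = rdot v u.
Proof. by rewrite !rdotE (hd_sym u v) ReJ. Qed.
Lemma JmulD u v : Jmul (u + v) = Jmul u + Jmul v.
Proof. by rewrite !JmulE scalerDr. Qed.
Lemma JmulZ a u : Jmul (rscale a u) = rscale a (Jmul u).
Proof. by rewrite !JmulE !rscaleE !scalerA mulrC. Qed.
Lemma rscaleA a b u : rscale a (rscale b u) = rscale (a * b) u.
Proof. by rewrite !rscaleE scalerA -rmorphM. Qed.
Lemma rscale1 u : rscale 1 u = u.
Proof. by rewrite rscaleE rmorph1 scale1r. Qed.
Lemma rscale0 u : rscale 0 u = 0.
Proof. by rewrite rscaleE rmorph0 scale0r. Qed.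

Lemma rscaleDr a u v : rscale a (u + v) = rscale a u + rscale a v.
Proof. by rewrite !rscaleE scalerDr. Qed.
Lemma rscale0r a : rscale a (0 : vec) = 0.
Proof. by rewrite rscaleE scaler0. Qed.

Lemma find_pair (W : vec -> Prop) : real_3_subspace W ->
  exists w1 w2 : vec, [/\ W w1, W w2, rdot w1 w1 = 1, rdot w2 w2 = 1 &
     rdot w1 w2 = 0 /\ rdot (Jmul w1) w2 = 0].
Proof.
move=> [f1 [f2 [f3 [ind HW]]]].
pose lin a b c := rscale a f1 + rscale b f2 + rscale c f3.
have inW : forall a b c, W (lin a b c) by move=> a b c; apply/HW; exists a, b, c.
set p1 := rdot f1 f1.
have p1gt0 : 0 < p1.
  rewrite lt_def rdot_ge0 andbT; apply/eqP => /rdot_eq0 f10.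
  have := ind 1 0 0; rewrite f10 rscale0r !rscale0 !addr0 => /(_ erefl) [].
  by move/eqP; rewrite oner_eq0.
set p2 := rdot f1 f2; set p3 := rdot f1 f3.
set q2 := rdot (Jmul f1) f2; set q3 := rdot (Jmul f1) f3.
have [b [c [bc0 hbc]]] : exists b c : R, (b != 0 \/ c != 0) /\ b * q2 + c * q3 = 0.
  case: (boolP ((q2 == 0) && (q3 == 0))) => [/andP[/eqP -> /eqP ->]|hq].
    by exists 1, 0; split; [left; rewrite oner_eq0 | rewrite !mulr0 addr0].
  exists q3, (- q2); split; last by ring.
  move: hq; rewrite negb_and => /orP[h|h]; [right; by rewrite oppr_eq0 | by left].
pose al := - (b * p2 + c * p3) / p1.
pose g := lin al b c.
have g1 : rdot f1 g = 0.
  rewrite /g /lin !rdotDr !rdotZr -/p1 -/p2 -/p3 /al.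
  by field; rewrite gt_eqF.
have g2 : rdot (Jmul f1) g = 0.
  by rewrite /g /lin !rdotDr !rdotZr rdotJ -/q2 -/q3 mulr0 add0r.
have ggt0 : 0 < rdot g g.
  rewrite lt_def rdot_ge0 andbT; apply/eqP => /rdot_eq0 g0.
  have [_ b0 c0] := ind al b c g0.
  by case: bc0 => /eqP; rewrite ?b0 ?c0.
set s1 := Num.sqrt p1; set s2 := Num.sqrt (rdot g g).
have s1gt0 : 0 < s1 by rewrite sqrtr_gt0.
have s2gt0 : 0 < s2 by rewrite sqrtr_gt0.
have s1s : s1 ^+ 2 = p1 by rewrite sqr_sqrtr // ltW.
have s2s : s2 ^+ 2 = rdot g g by rewrite sqr_sqrtr // ltW.
exists (rscale s1^-1 f1), (rscale s2^-1 g); split.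
- have -> : rscale s1^-1 f1 = lin s1^-1 0 0 by rewrite /lin !rscale0 !addr0.
  exact: inW.
- have -> : rscale s2^-1 g = lin (s2^-1 * al) (s2^-1 * b) (s2^-1 * c).
    by rewrite /g /lin !rscaleDr !rscaleA.
  exact: inW.
- rewrite rdotZl rdotZr -/p1 -s1s; field; by rewrite gt_eqF.
- rewrite rdotZl rdotZr -s2s; field; by rewrite gt_eqF.
- by split; rewrite ?JmulZ rdotZl rdotZr ?g1 ?g2 !mulr0.
Qed.
End Cx.

Section Main.
Variables (R : realType) (n : nat).
Local Notation C := (complex R).
Local Notation vec := 'cV[C]_n.

Lemma SU_ext (u v : vec) (i0 i1 : 'I_n) : (3 <= n)%N -> val i0 = 0%N -> val i1 = 1%N ->
  hd u u = 1 -> hd v v = 1 -> hd u v = 0 ->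
  exists P : 'M[C]_n, in_SU P /\ forall k, P k i0 = u k 0 /\ P k i1 = v k 0.
Proof.
move=> n3 h0 h1 uu vv uv.
have vu : hd v u = 0 by rewrite hd_sym uv conjC0.
pose V := \matrix_(i < 2, j < n) (if val i == 0%N then u j 0 else v j 0).
have E : forall a b : vec, \sum_k (a k 0 * (conjC (b k 0))) = hd b a.
  by move=> a b; apply: eq_bigr => k _; rewrite mulrC.
have Vu : V \is unitarymx.
  apply/unitarymxP; apply/matrixP => i j; rewrite !mxE.
  under eq_bigr => k _ do rewrite !mxE.
  case: i => [[|[|//]]] ?; case: j => [[|[|//]]] ? /=; rewrite E //.
have [Q [Qu Qd Qr]] := ext_square n3 Vu.
exists Q^T; split; last first.
  move=> k; rewrite !mxE !Qr ?h0 ?h1 // !mxE.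
  by split; rewrite /= inordK.
split; last exact: (etrans (det_tr Q) Qd).
have := unitarymxP Qu => /(congr1 (map_mx conjC)).
rewrite map_mxM map_mx1 => <-.
rewrite /adjmx; congr (_ *m _); apply/matrixP => i j; rewrite !mxE //=.
by rewrite conjCK.
Qed.

Lemma adjmxM (A B : 'M[C]_n) : adjmx (A *m B) = adjmx B *m adjmx A.
Proof. by rewrite /adjmx map_mxM trmx_mul. Qed.
Lemma adjmxK (A : 'M[C]_n) : adjmx (adjmx A) = A.
Proof. by apply/matrixP => i j; rewrite /adjmx !mxE /= conjcK. Qed.
Lemma det_adjmx (A : 'M[C]_n) : \det (adjmx A) = conjC (\det A).
Proof. by rewrite /adjmx det_tr det_map_mx. Qed.

Lemma colP_eq (P : 'M[C]_n) (w : vec) i0 : (forall k, P k i0 = w k 0) ->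
  w = P *m delta_mx i0 0.
Proof. by move=> h; rewrite -colE; apply/matrixP => k j; rewrite (ord1 j) mxE h. Qed.
End Main.

Theorem lemma11p4 (R : realType) (n : nat) (W : 'cV[complex R]_n -> Prop)
    (x e : 'cV[complex R]_n) :
  (3 <= n)%N ->
  real_3_subspace W ->
  is_unit_vec x -> is_unit_vec e -> perp_xJx x e ->
  exists V : 'cV[complex R]_n -> Prop, in_SU_orbit W V /\ V x /\ V e.
Proof.
move=> n3 HW ux ue pe.
have [w1 [w2 [W1 W2 n1 n2 [o1 o2]]]] := find_pair HW.
have ex : rdot e x = 0.
  by apply: pe; exists 1, 0; rewrite rscale1 rscale0 addr0.
have eJx : rdot e (Jmul x) = 0.
  by apply: pe; exists 0, 1; rewrite rscale1 rscale0 add0r.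
have hxx : hd x x = 1 by rewrite hd_self ux.
have hee : hd e e = 1 by rewrite hd_self ue.
have hxe : hd x e = 0.
  by rewrite hdE rdotC ex rdotC eJx.
have h11 : hd w1 w1 = 1 by rewrite hd_self n1.
have h22 : hd w2 w2 = 1 by rewrite hd_self n2.
have h12 : hd w1 w2 = 0 by rewrite hdE o1 o2.
have n0 : (0 < n)%N by apply: leq_trans n3.
have n1' : (1 < n)%N by apply: leq_trans n3.
pose i0 : 'I_n := Ordinal n0; pose i1 : 'I_n := Ordinal n1'.
have [Pw [[Pwu Pwd] Pwc]] := SU_ext n3 (i0:=i0) (i1:=i1) erefl erefl h11 h22 h12.
have [Px [[Pxu Pxd] Pxc]] := SU_ext n3 (i0:=i0) (i1:=i1) erefl erefl hxx hee hxe.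
pose U := Px *m adjmx Pw.
have PwU : Pw *m adjmx Pw = 1%:M by apply: mulmx1C.
have key : forall i (w y : 'cV[complex R]_n), (forall k, Pw k i = w k 0) ->
    (forall k, Px k i = y k 0) -> U *m w = y.
  move=> i w y hw hy.
  rewrite (colP_eq hw) (colP_eq hy) /U -!mulmxA (mulmxA (adjmx Pw)) Pwu.
  by rewrite mul1mx.
exists (act_set U W); split; last split.
- exists U; split => //; split.
    rewrite /U adjmxM adjmxK -!mulmxA (mulmxA (adjmx Px)) Pxu mul1mx.
    exact: PwU.
  rewrite /U det_mulmx det_adjmx Pxd Pwd.
  by rewrite mul1r conjC1.
- exists w1; split => //; symmetry; apply: (key i0) => k; [exact: (Pwc k).1 | exact: (Pxc k).1].
- exists w2; split => //; symmetry; apply: (key i1) => k; [exact: (Pwc k).2 | exact: (Pxc k).2].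
Qed.
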